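(* Let $G$ be a group and $X \subseteq \mathbb{N}$. Then $G/\mathrm{Tor}^{X}_{\omega}(G) \cong G^{X-\mathrm{tf}}$; that is, $G/\mathrm{Tor}^{X}_{\omega}(G)$ is $X$-torsion-free and the quotient map $h: G \to G/\mathrm{Tor}^{X}_{\omega}(G)$ has the property that for every $X$-torsion-free group $K$ and every homomorphism $f: G \to K$ there is a homomorphism $\phi: G/\mathrm{Tor}^{X}_{\omega}(G) \to K$ with $f = \phi \circ h$.
   Context: For a group $G$ and $X \subseteq \mathbb{N}$, the $X$-torsion of $G$ is $\mathrm{Tor}^{X}(G) := \{ g \in G \mid \exists n \in X \text{ with } g^{n} = e\}$, and $G$ is $X$-torsion-free if $\mathrm{Tor}^{X}(G) = \{e\}$. A surjective homomorphism $h: G \to H$ onto an $X$-torsion-free group $H$ is universal if for every $X$-torsion-free group $K$ and homomorphism $f: G\to K$ there is a homomorphism $\phi: H \to K$ with $f = \phi\circ h$; such $H$ is unique up to isomorphism and denoted $G^{X-\mathrm{tf}}$ (the universal $X$-torsion-free quotient). Define inductively $\mathrm{Tor}^{X}_{0}(G) := \{e\}$, $\mathrm{Tor}^{X}_{n+1}(G) := \langle\langle \{ g \in G \mid g\,\mathrm{Tor}^{X}_{n}(G) \in \mathrm{Tor}^{X}(G/\mathrm{Tor}^{X}_{n}(G))\} \rangle\rangle^{G}$ (normal closure in $G$), and $\mathrm{Tor}^{X}_{\omega}(G) := \bigcup_{n \in \mathbb{N}} \mathrm{Tor}^{X}_{n}(G)$. *)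

(* Defs.v *)
From Stdlib Require Import Arith.

Set Implicit Arguments.

Record group := Group {
  carrier :> Type;
  gmul : carrier -> carrier -> carrier;
  gone : carrier;
  ginv : carrier -> carrier;
  gmulA : forall x y z, gmul x (gmul y z) = gmul (gmul x y) z;
  gmul1l : forall x, gmul gone x = x;
  gmul1r : forall x, gmul x gone = x;
  gmulVl : forall x, gmul (ginv x) x = gone;
  gmulVr : forall x, gmul x (ginv x) = gone
}.

Arguments gmul {g}.
Arguments gone {g}.
Arguments ginv {g}.

Fixpoint gpow {G : group} (g : G) (n : nat) : G :=
  match n with
  | 0 => gone
  | S n => gmul g (gpow g n)
  end.

Definition is_hom {G H : group} (f : G -> H) : Prop :=
  forall x y : G, f (gmul x y) = gmul (f x) (f y).

Definition Tor (X : nat -> Prop) (G : group) : G -> Prop :=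
  fun g => exists n, X n /\ gpow g n = gone.

Definition torsion_free (X : nat -> Prop) (G : group) : Prop :=
  forall g : G, Tor X G g -> g = gone.

Definition normal_subgroup {G : group} (N : G -> Prop) : Prop :=
  N gone /\
  (forall x y, N x -> N y -> N (gmul x y)) /\
  (forall x, N x -> N (ginv x)) /\
  (forall x g, N x -> N (gmul (ginv g) (gmul x g))).

Definition normal_closure {G : group} (S : G -> Prop) : G -> Prop :=
  fun g => forall N : G -> Prop, normal_subgroup N -> (forall x, S x -> N x) -> N g.

(** Tor^X_n(G).  The condition  g Tor_n ∈ Tor^X(G/Tor_n)  is written out:
    (g Tor_n)^m is the trivial coset iff g^m ∈ Tor_n. *)
Fixpoint Tor_n (X : nat -> Prop) (G : group) (n : nat) : G -> Prop :=
  match n with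
  | 0 => fun g => g = gone
  | S n => normal_closure (fun g => exists m, X m /\ Tor_n X G n (gpow g m))
  end.

Definition Tor_omega (X : nat -> Prop) (G : group) : G -> Prop :=
  fun g => exists n, Tor_n X G n g.

(* Main.v *)
Require Import Defs.
From Stdlib Require Import ClassicalEpsilon FunctionalExtensionality PropExtensionality ProofIrrelevance.
Arguments gmulA {g} x y z.
Arguments gmul1l {g} x.
Arguments gmul1r {g} x.
Arguments gmulVl {g} x.
Arguments gmulVr {g} x.

Section GL.
Variable G : group.
Implicit Types x y z : G.

Lemma inv_uniq x y : gmul x y = gone -> ginv x = y.
Proof.
  intro H. rewrite <- (gmul1r (ginv x)). rewrite <- H.
  rewrite gmulA, gmulVl, gmul1l. reflexivity.
Qed.

Lemma ginv_mul x y : ginv (gmul x y) = gmul (ginv y) (ginv x).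
Proof.
  apply inv_uniq. rewrite gmulA. rewrite <- (gmulA x y).
  rewrite gmulVr, gmul1r, gmulVr. reflexivity.
Qed.

Lemma ginv_ginv x : ginv (ginv x) = x.
Proof. apply inv_uniq. apply gmulVl. Qed.

Lemma ginv_one : ginv (@gone G) = gone.
Proof. apply inv_uniq. apply gmul1l. Qed.

Lemma mul_inv_cancel x y : gmul x (gmul (ginv x) y) = y.
Proof. rewrite gmulA, gmulVr, gmul1l. reflexivity. Qed.

Lemma inv_mul_cancel x y : gmul (ginv x) (gmul x y) = y.
Proof. rewrite gmulA, gmulVl, gmul1l. reflexivity. Qed.
End GL.
Arguments inv_uniq {G} x y.
Arguments ginv_mul {G} x y.
Arguments ginv_ginv {G} x.
Arguments ginv_one {G}.
Arguments mul_inv_cancel {G} x y.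
Arguments inv_mul_cancel {G} x y.

Section Hom.
Variables (G H : group) (f : G -> H).
Hypothesis hf : is_hom f.

Lemma hom_one : f gone = gone.
Proof.
  assert (E : f gone = gmul (f gone) (f gone)) by (rewrite <- hf, gmul1l; reflexivity).
  transitivity (gmul (ginv (f gone)) (gmul (f gone) (f gone))).
  - rewrite inv_mul_cancel. reflexivity.
  - rewrite <- E. apply gmulVl.
Qed.

Lemma hom_inv x : f (ginv x) = ginv (f x).
Proof.
  symmetry. apply inv_uniq. rewrite <- hf, gmulVr. apply hom_one.
Qed.

Lemma hom_pow x n : f (gpow x n) = gpow (f x) n.
Proof.
  induction n; simpl. apply hom_one. rewrite hf, IHn. reflexivity.
Qed.
End Hom.
Arguments hom_one {G H f} hf.
Arguments hom_inv {G H f} hf x.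
Arguments hom_pow {G H f} hf x n.

Section Quot.
Variable G : group.
Variable N : G -> Prop.
Hypothesis HN : normal_subgroup N.

Lemma N1 : N gone. Proof. apply HN. Qed.
Lemma NM x y : N x -> N y -> N (gmul x y). Proof. apply HN. Qed.
Lemma NV x : N x -> N (ginv x). Proof. apply HN. Qed.
Lemma NJ x g : N x -> N (gmul (ginv g) (gmul x g)). Proof. apply HN. Qed.

Definition cls (g : G) : G -> Prop := fun x => N (gmul (ginv g) x).

Lemma cls_eq a b : cls a = cls b <-> N (gmul (ginv a) b).
Proof.
  split.
  - intro E. assert (H : cls b b) by (unfold cls; rewrite gmulVl; apply N1).
    rewrite <- E in H. exact H.
  - intro H. apply functional_extensionality; intro x. unfold cls.
    apply propositional_extensionality. split; intro H'.
    + rewrite <- (inv_mul_cancel (ginv a * b)%type) in H' || idtac.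
      replace (gmul (ginv b) x) with (gmul (ginv (gmul (ginv a) b)) (gmul (ginv a) x)).
      * apply NM; [apply NV; exact H | exact H'].
      * rewrite ginv_mul, ginv_ginv, <- gmulA, mul_inv_cancel. reflexivity.
    + replace (gmul (ginv a) x) with (gmul (gmul (ginv a) b) (gmul (ginv b) x)).
      * apply NM; assumption.
      * rewrite <- gmulA, mul_inv_cancel. reflexivity.
Qed.

Definition Qc := {P : G -> Prop | exists g, P = cls g}.
Definition mk (g : G) : Qc := exist _ (cls g) (ex_intro _ g eq_refl).
Definition rep (P : Qc) : G := proj1_sig (constructive_indefinite_description _ (proj2_sig P)).

Lemma mk_rep P : mk (rep P) = P.
Proof.
  unfold rep. destruct (constructive_indefinite_description _ _) as [g Hg]. simpl.
  destruct P as [P HP]. unfold mk. simpl in Hg. subst P.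
  f_equal. apply proof_irrelevance.
Qed.

Lemma mk_eq a b : mk a = mk b <-> N (gmul (ginv a) b).
Proof.
  rewrite <- cls_eq. split; intro E.
  - apply (f_equal (@proj1_sig _ _)) in E. exact E.
  - unfold mk. revert E. generalize (ex_intro (fun g0 => cls a = cls g0) a eq_refl).
    generalize (ex_intro (fun g0 => cls b = cls g0) b eq_refl).
    intros p q E. revert p q. rewrite E. intros p q. f_equal. apply proof_irrelevance.
Qed.

Lemma qind (P : Qc) : exists a, P = mk a.
Proof. exists (rep P). symmetry. apply mk_rep. Qed.

Definition qmul (P Q : Qc) : Qc := mk (gmul (rep P) (rep Q)).
Definition qone : Qc := mk gone.
Definition qinv (P : Qc) : Qc := mk (ginv (rep P)).

Lemma rep_mk a : N (gmul (ginv a) (rep (mk a))).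
Proof. apply mk_eq. symmetry. apply mk_rep. Qed.

Lemma mk_compat_mul a b a' b' : N (gmul (ginv a) a') -> N (gmul (ginv b) b') ->
  mk (gmul a b) = mk (gmul a' b').
Proof.
  intros Ha Hb. apply mk_eq.
  replace (gmul (ginv (gmul a b)) (gmul a' b'))
    with (gmul (gmul (ginv b) (gmul (gmul (ginv a) a') b)) (gmul (ginv b) b')).
  - apply NM; [apply NJ; exact Ha | exact Hb].
  - rewrite ginv_mul. rewrite <- !gmulA. f_equal. f_equal. f_equal.
    apply mul_inv_cancel.
Qed.

Lemma qmul_mk a b : qmul (mk a) (mk b) = mk (gmul a b).
Proof.
  unfold qmul. symmetry. apply mk_compat_mul; apply rep_mk.
Qed.

Lemma qinv_mk a : qinv (mk a) = mk (ginv a).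
Proof.
  unfold qinv. apply mk_eq. rewrite ginv_ginv.
  pose proof (rep_mk a) as H.
  replace (gmul (rep (mk a)) (ginv a)) with
    (gmul (ginv (ginv (rep (mk a)))) (gmul (gmul (ginv a) (rep (mk a))) (ginv (rep (mk a))))).
  - apply NJ. exact H.
  - rewrite ginv_ginv, <- gmulA, gmulVr, gmul1r. reflexivity.
Qed.

Lemma qA x y z : qmul x (qmul y z) = qmul (qmul x y) z.
Proof.
  destruct (qind x) as [a ->]; destruct (qind y) as [b ->]; destruct (qind z) as [c ->].
  rewrite !qmul_mk, gmulA. reflexivity.
Qed.
Lemma q1l x : qmul qone x = x.
Proof. destruct (qind x) as [a ->]. unfold qone. rewrite qmul_mk, gmul1l. reflexivity. Qed.
Lemma q1r x : qmul x qone = x.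
Proof. destruct (qind x) as [a ->]. unfold qone. rewrite qmul_mk, gmul1r. reflexivity. Qed.
Lemma qVl x : qmul (qinv x) x = qone.
Proof. destruct (qind x) as [a ->]. rewrite qinv_mk, qmul_mk, gmulVl. reflexivity. Qed.
Lemma qVr x : qmul x (qinv x) = qone.
Proof. destruct (qind x) as [a ->]. rewrite qinv_mk, qmul_mk, gmulVr. reflexivity. Qed.

Definition Qg : group := @Group Qc qmul qone qinv qA q1l q1r qVl qVr.

Lemma mk_one a : mk a = qone <-> N a.
Proof.
  unfold qone. rewrite mk_eq. split; intro H.
  - rewrite gmul1r in H. apply NV in H. rewrite ginv_ginv in H. exact H.
  - rewrite gmul1r. apply NV. exact H.
Qed.

Lemma mk_hom : @is_hom G Qg mk.
Proof. intros x y. simpl. symmetry. apply qmul_mk. Qed.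
End Quot.
Arguments Qg {G N} HN.
Arguments mk {G} N g.
Arguments mk_one {G N} HN a.
Arguments qind {G N} P.
Arguments rep_mk {G N} HN a.
Arguments mk_hom {G N} HN.
Arguments qone {G} N.
Arguments rep {G N} P.
Arguments qmul {G N} P Q.

Section Tor.
Variables (G : group) (X : nat -> Prop).

Lemma closure_normal (S : G -> Prop) : normal_subgroup (normal_closure S).
Proof.
  unfold normal_closure. repeat split.
  - intros M HM _. apply HM.
  - intros x y Hx Hy M HM HS. apply HM; [apply Hx | apply Hy]; assumption.
  - intros x Hx M HM HS. apply HM. apply Hx; assumption.
  - intros x g Hx M HM HS. apply HM. apply Hx; assumption.
Qed.

Lemma Tor_n_normal n : normal_subgroup (Tor_n X G n).
Proof.
  destruct n; simpl.
  - repeat split.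
    + intros x y -> ->. apply gmul1l.
    + intros x ->. apply ginv_one.
    + intros x g ->. rewrite gmul1l. apply gmulVl.
  - apply closure_normal.
Qed.

Lemma Tor_n_mono n x : Tor_n X G n x -> Tor_n X G (S n) x.
Proof.
  revert x. induction n; intros x Hx.
  - simpl in Hx. subst. simpl. intros M HM _. apply HM.
  - change (normal_closure (fun g => exists m, X m /\ Tor_n X G n (gpow g m)) x) in Hx.
    change (normal_closure (fun g => exists m, X m /\ Tor_n X G (S n) (gpow g m)) x).
    intros M HM HS. apply Hx; [exact HM|]. intros y [m [Hm Hy]]. apply HS.
    exists m. split; [exact Hm | apply IHn; exact Hy].
Qed.

Lemma Tor_n_le n k x : Tor_n X G n x -> Tor_n X G (n + k) x.
Proof.
  induction k; intro H.
  - rewrite PeanoNat.Nat.add_0_r. exact H.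
  - rewrite PeanoNat.Nat.add_succ_r. apply Tor_n_mono. apply IHk. exact H.
Qed.

Lemma Tor_omega_normal : normal_subgroup (Tor_omega X G).
Proof.
  unfold Tor_omega. repeat split.
  - exists 0. reflexivity.
  - intros x y [n Hx] [k Hy]. exists (n + k). apply (Tor_n_normal (n + k)).
    + apply Tor_n_le. exact Hx.
    + rewrite PeanoNat.Nat.add_comm. apply Tor_n_le. exact Hy.
  - intros x [n Hx]. exists n. apply (Tor_n_normal n). exact Hx.
  - intros x g [n Hx]. exists n. apply (Tor_n_normal n). exact Hx.
Qed.
End Tor.

Theorem corollary2p4 (G : group) (X : nat -> Prop) :
  exists (Q : group) (h : G -> Q),
    is_hom h /\
    (forall q : Q, exists g : G, h g = q) /\
    (forall g : G, h g = gone <-> Tor_omega X G g) /\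
    torsion_free X Q /\
    (forall (K : group) (f : G -> K), torsion_free X K -> is_hom f ->
       exists phi : Q -> K, is_hom phi /\ forall g : G, f g = phi (h g)).
Proof.
  pose proof (Tor_omega_normal G X) as HN.
  exists (Qg HN), (mk (Tor_omega X G)).
  assert (Hh : is_hom (G:=G) (H:=Qg HN) (mk (Tor_omega X G))) by apply mk_hom.
  split; [exact Hh|]. split; [|split; [|split]].
  - intro q. destruct (qind q) as [a ->]. exists a. reflexivity.
  - intro g. apply (mk_one HN).
  - intros q [m [Hm Hq]]. destruct (qind q) as [a ->].
    change (mk (Tor_omega X G) a = qone (Tor_omega X G)). apply (mk_one HN).
    rewrite <- (hom_pow Hh) in Hq. apply (mk_one HN) in Hq.
    destruct Hq as [k Hk]. exists (S k). simpl. intros M HM HS. apply HS.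
    exists m. split; assumption.
  - intros K f HK Hf.
    assert (Ker : forall g, Tor_omega X G g -> f g = gone).
    { intros g [k Hk]. revert g Hk. induction k; intros g Hg.
      - simpl in Hg. subst. apply (hom_one Hf).
      - apply Hg.
        + repeat split.
          * apply (hom_one Hf).
          * intros x y Hx Hy. rewrite Hf, Hx, Hy. apply gmul1l.
          * intros x Hx. rewrite (hom_inv Hf), Hx. apply ginv_one.
          * intros x g0 Hx. rewrite !Hf, Hx, gmul1l, (hom_inv Hf). apply gmulVl.
        + intros x [m [Hm Hx]]. apply HK. exists m. split; [exact Hm|].
          rewrite <- (hom_pow Hf). apply IHk. exact Hx. }
    assert (Hc : forall a b, Tor_omega X G (gmul (ginv a) b) -> f a = f b).
    { intros a b H. apply Ker in H. rewrite Hf, (hom_inv Hf) in H.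
      rewrite <- (mul_inv_cancel (f a) (f b)), H. symmetry. apply gmul1r. }
    exists (fun P => f (rep P)). split.
    + intros P Q. simpl. unfold qmul. rewrite <- Hf. symmetry. apply Hc.
      apply rep_mk. exact HN.
    + intro g. apply Hc. apply rep_mk. exact HN.
Qed.
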